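(* Let $(\alpha,\beta)=(\alpha_0,\beta_0)\in\Delta_K$, $(\alpha_n,\beta_n)=T^n(\alpha,\beta)$, and $n\in\mathbb{Z}_{\ge0}$. Write $\varepsilon(\alpha_n,\beta_n)=(i',j')$ and let $k\in\{0,1,2\}$ be the unique element with $k\ne i'$, $k\ne j'$. Then $\varepsilon(\alpha_{n+1},\beta_{n+1})\neq(i',k)$ and $\varepsilon(\alpha_{n+1},\beta_{n+1})\neq(k,i')$. (Equivalently, the following 12 two-letter words never occur as $\varepsilon(\alpha_n,\beta_n)\varepsilon(\alpha_{n+1},\beta_{n+1})$: $(1,2)$ followed by $(0,1)$ or $(1,0)$; $(2,1)$ followed by $(0,2)$ or $(2,0)$; $(0,1)$ followed by $(0,2)$ or $(2,0)$; $(1,0)$ followed by $(1,2)$ or $(2,1)$; $(0,2)$ followed by $(0,1)$ or $(1,0)$; $(2,0)$ followed by $(1,2)$ or $(2,1)$.)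
   Context: Let $K\subset\mathbb{R}$ be a real cubic number field, $N=N_{K/\mathbb{Q}}$ its norm. Fix $r=p/q$ with $p,q$ positive coprime integers and $3\nmid p$. Let $\Delta_K=\{(\alpha,\beta)\in K^2:\ 1,\alpha,\beta \text{ linearly independent over }\mathbb{Q},\ \alpha,\beta>0,\ \alpha+\beta<1\}$ and $Ind=\{(i,j): i,j\in\{0,1,2\},\ i\neq j\}$. Let $\Delta=\{(x,y)\in\mathbb{R}^2: x,y\ge 0,\ x+y\le 1\}$ and $\triangle(1,2)=\{(x,y)\in\Delta: x\ge y\}$, $\triangle(2,1)=\{x\le y\}$, $\triangle(0,1)=\{2x+y-1\le 0\}$, $\triangle(1,0)=\{2x+y-1\ge 0\}$, $\triangle(0,2)=\{x+2y-1\le0\}$, $\triangle(2,0)=\{x+2y-1\ge 0\}$ (all subsets of $\Delta$). Maps $T_{(i,j)}:\triangle(i,j)\to\Delta$: $T_{(1,2)}(x,y)=(\frac{x-y}{1-y},\frac{y}{1-y})$, $T_{(2,1)}(x,y)=(\frac{x}{1-x},\frac{y-x}{1-x})$, $T_{(0,1)}(x,y)=(\frac{x}{1-x},\frac{y}{1-x})$, $T_{(1,0)}(x,y)=(\frac{2x+y-1}{x+y},\frac{y}{x+y})$, $T_{(0,2)}(x,y)=(\frac{x}{1-y},\frac{y}{1-y})$, $T_{(2,0)}(x,y)=(\frac{x}{x+y},\frac{x+2y-1}{x+y})$. For $(\alpha,\beta)\in\Delta_K$ put $\gamma=1-\alpha-\beta$ and $v_{\{1,2\}}=\frac{\alpha^r\beta^r}{|N(\alpha)N(\beta)|}$,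 $v_{\{0,1\}}=\frac{\alpha^r\gamma^r}{|N(\alpha)N(\gamma)|}$, $v_{\{0,2\}}=\frac{\beta^r\gamma^r}{|N(\beta)N(\gamma)|}$; the maximum is attained at a unique pair $\{i_0,j_0\}$. $\varepsilon(\alpha,\beta)$ is the ordered pair $(i,j)\in Ind$ with $\{i,j\}=\{i_0,j_0\}$ and $(\alpha,\beta)\in\triangle(i,j)$, and $T(\alpha,\beta)=T_{\varepsilon(\alpha,\beta)}(\alpha,\beta)$ (a map $\Delta_K\to\Delta_K$). *)

(* Defs.v *)
From HB Require Import structures.
From mathcomp Require Import all_boot all_order all_algebra.
From mathcomp Require Import boolp classical_sets reals exp.
Set Implicit Arguments. Unset Strict Implicit. Unset Printing Implicit Defensive.
Import Order.TTheory GRing.Theory Num.Theory.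
Local Open Scope ring_scope.

Section Defs.
Variable R : realType.

Definition qcomb (e : 'I_3 -> R) (c : 'I_3 -> rat) : R :=
  \sum_(i < 3) ratr (c i) * e i.

Definition cubic_field (K : set R) (e : 'I_3 -> R) : Prop :=
  [/\ (forall x, K x <-> exists c, x = qcomb e c),
      (forall c, qcomb e c = 0 -> forall i, c i = 0),
      K 1,
      (forall x y, K x -> K y -> K (x * y)) &
      (forall x, K x -> x != 0 -> K x^-1)].

(* coordinates of x in the basis e (chosen classically; unique when e is a basis
   and x is in the span) *)
Definition coords (e : 'I_3 -> R) (x : R) : 'I_3 -> rat :=
  match pselect (exists c, x = qcomb e c) with
  | left h => proj1_sig (cid h)
  | right _ => fun _ => 0
  end.

(* N_{K/Q}(a): determinant of the Q-linear map x |-> a x of K, in the basis e *)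
Definition normK (e : 'I_3 -> R) (a : R) : rat :=
  \det (\matrix_(i < 3, j < 3) coords e (a * e i) j).

Definition DeltaK (K : set R) (a b : R) : Prop :=
  [/\ K a /\ K b,
      (forall x y z : rat, ratr x + ratr y * a + ratr z * b = 0 ->
         [/\ x = 0, y = 0 & z = 0]),
      0 < a, 0 < b & a + b < 1].

Definition Tij (ij : nat * nat) (p : R * R) : R * R :=
  let: (x, y) := p in
  match ij with
  | (1, 2)%N => ((x - y) / (1 - y), y / (1 - y))
  | (2, 1)%N => (x / (1 - x), (y - x) / (1 - x))
  | (0, 1)%N => (x / (1 - x), y / (1 - x))
  | (1, 0)%N => ((2 * x + y - 1) / (x + y), y / (x + y))
  | (0, 2)%N => (x / (1 - y), y / (1 - y))
  | (2, 0)%N => (x / (x + y), (x + 2 * y - 1) / (x + y))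
  | _ => (x, y)
  end.

Variables (e : 'I_3 -> R) (r : R).

Definition vv (a b : R) : R :=
  powR a r * powR b r / `| ratr (normK e a * normK e b) |.

(* epsilon(alpha, beta): the unordered pair {i0,j0} maximizing v (unique by the
   paper; ties are broken arbitrarily here), then the order given by the
   triangle triangle(i,j) containing (alpha,beta) (boundaries never meet
   Delta_K). *)
Definition eps (p : R * R) : nat * nat :=
  let: (a, b) := p in
  let g := 1 - a - b in
  let v12 := vv a b in
  let v01 := vv a g in
  let v02 := vv b g in
  if (v01 <= v12) && (v02 <= v12) then
    (if b <= a then (1, 2)%N else (2, 1)%N)
  else if v02 <= v01 then
    (if 2 * a + b - 1 <= 0 then (0, 1)%N else (1, 0)%N)
  else
    (if a + 2 * b - 1 <= 0 then (0, 2)%N else (2, 0)%N).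

Definition Tmap (p : R * R) : R * R := Tij (eps p) p.

End Defs.

(* Main.v *)
Require Import Defs.
From HB Require Import structures.
From mathcomp Require Import all_boot all_order all_algebra.
From mathcomp Require Import boolp classical_sets reals exp.
From mathcomp Require Import ring lra.
Set Implicit Arguments. Unset Strict Implicit. Unset Printing Implicit Defensive.
Import Order.TTheory GRing.Theory Num.Theory.
Local Open Scope ring_scope.

Section Norm.
Variable R : realType.
Variables (K : set R) (e : 'I_3 -> R).
Hypothesis cf : cubic_field K e.

Lemma qcombB c d : qcomb e c - qcomb e d = qcomb e (fun i => c i - d i).
Proof. by rewrite /qcomb -sumrB; apply: eq_bigr => i _; rewrite rmorphB mulrBl. Qed.

Lemma qcombD c d : qcomb e c + qcomb e d = qcomb e (fun i => c i + d i).
Proof. by rewrite /qcomb -big_split; apply: eq_bigr => i _; rewrite rmorphD mulrDl. Qed.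

Lemma qcombZ (a : rat) c : ratr a * qcomb e c = qcomb e (fun i => a * c i).
Proof. by rewrite /qcomb mulr_sumr; apply: eq_bigr => i _; rewrite rmorphM mulrA. Qed.

Lemma qcomb_inj c d : qcomb e c = qcomb e d -> forall i, c i = d i.
Proof.
case: cf => _ Hind _ _ _ H i; apply/eqP; rewrite -subr_eq0; apply/eqP.
by apply: (Hind (fun i => c i - d i)) ; rewrite -qcombB H subrr.
Qed.

Lemma coordsP x : K x -> x = qcomb e (coords e x).
Proof.
case: cf => HK _ _ _ _ /HK Hx; rewrite /coords.
case: pselect => [h|//]; by case: (cid h).
Qed.

Lemma coordsE x c : x = qcomb e c -> forall i, coords e x i = c i.
Proof.
case: cf => HK _ _ _ _ Hx; apply: qcomb_inj.
have Kx : K x by apply/HK; exists c.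
by rewrite -Hx -coordsP.
Qed.

Lemma KD x y : K x -> K y -> K (x + y).
Proof. case: cf => HK _ _ _ _ /HK[c ->] /HK[d ->]; apply/HK; exists (fun i => c i + d i); exact: qcombD. Qed.

Lemma KZ (a : rat) x : K x -> K (ratr a * x).
Proof. case: cf => HK _ _ _ _ /HK[c ->]; apply/HK; exists (fun i => a * c i); exact: qcombZ. Qed.

Lemma KN x : K x -> K (- x).
Proof. move=> Hx; have := KZ (-1) Hx; by rewrite rmorphN1 mulN1r. Qed.

Lemma KB x y : K x -> K y -> K (x - y).
Proof. by move=> Hx Hy; apply: KD => //; apply: KN. Qed.

Lemma K1 : K 1. Proof. by case: cf. Qed.
Lemma KM x y : K x -> K y -> K (x * y). Proof. by case: cf => _ _ _ H _; apply: H. Qed.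
Lemma KV x : K x -> x != 0 -> K x^-1. Proof. by case: cf => _ _ _ _ H; apply: H. Qed.
Lemma Krat (a : rat) : K (ratr a).
Proof. by rewrite -[ratr a]mulr1; apply: KZ; apply: K1. Qed.

Lemma Ke i : K (e i).
Proof.
case: cf => HK _ _ _ _; apply/HK; exists (fun j => (j == i)%:R).
rewrite /qcomb (bigD1 i) //= eqxx rmorph1 mul1r big1 ?addr0 //.
by move=> j /negbTE ->; rewrite rmorph0 mul0r.
Qed.

Definition Mx a := \matrix_(i < 3, j < 3) coords e (a * e i) j.

Lemma MxE a i : K a -> a * e i = qcomb e (fun j => Mx a i j).
Proof.
move=> Ha; rewrite (coordsP (KM Ha (Ke i))) /qcomb; apply: eq_bigr => j _.
by rewrite mxE.
Qed.

Lemma MxM a b : K a -> K b -> Mx (a * b) = Mx b *m Mx a.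
Proof.
move=> Ha Hb; apply/matrixP => i l.
rewrite [in LHS]mxE mxE.
apply: (coordsE (c := fun l => \sum_j Mx b i j * Mx a j l)).
rewrite -mulrA (MxE i Hb) /qcomb mulr_sumr.
under eq_bigr => j _ do rewrite mulrCA (MxE j Ha) /qcomb mulr_sumr.
rewrite exchange_big /=; apply: eq_bigr => k _.
rewrite rmorph_sum mulr_suml; apply: eq_bigr => j _.
by rewrite rmorphM mulrA.
Qed.

Lemma normKM a b : K a -> K b -> normK e (a * b) = normK e a * normK e b.
Proof.
move=> Ha Hb; rewrite /normK -!/(Mx _) MxM // det_mulmx mulrC //.
Qed.

Lemma normK_rat (c : rat) : normK e (ratr c) = c ^+ 3.
Proof.
rewrite /normK -/(Mx _).
have -> : Mx (ratr c) = c%:M.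
  apply/matrixP => i j; rewrite mxE.
  apply: (coordsE (c := fun j => (c%:M : 'M_3) i j)).
  rewrite /qcomb (bigD1 i) //= mxE eqxx mulr1n big1 ?addr0 //.
  by move=> k /negbTE kn; rewrite mxE eq_sym kn mulr0n rmorph0 mul0r.
by rewrite det_scalar.
Qed.

Lemma normK_neq0 a : K a -> a != 0 -> normK e a != 0.
Proof.
move=> Ha a0; have := normKM Ha (KV Ha a0); rewrite mulfV //.
have := normK_rat 1; rewrite rmorph1 expr1n => -> H.
apply/eqP => H0; move: H; rewrite H0 mul0r => H1.
have := @oner_neq0 rat; by rewrite H1 eqxx.
Qed.

End Norm.

Definition FF (R : realType) (e : 'I_3 -> R) (r x : R) :=
  powR x r / `| ratr (normK e x) |.

Lemma vvF (R : realType) (e : 'I_3 -> R) r a b : vv e r a b = FF e r a * FF e r b.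
Proof. by rewrite /vv /FF rmorphM normrM invfM mulrACA. Qed.

Section FF.
Variable R : realType.
Variables (K : set R) (e : 'I_3 -> R).
Hypothesis cf : cubic_field K e.
Variable r : R.

Lemma FF_gt0 x : K x -> 0 < x -> 0 < FF e r x.
Proof.
move=> Kx x0; rewrite /FF divr_gt0 ?powR_gt0 // normr_gt0 fmorph_eq0.
by apply: (normK_neq0 cf Kx); rewrite gt_eqF.
Qed.

Lemma FFM s y : K s -> K y -> 0 < s -> 0 < y -> FF e r (s * y) = FF e r s * FF e r y.
Proof.
move=> Ks Ky s0 y0; rewrite /FF (normKM cf Ks Ky) powRM ?ltW //.
by rewrite rmorphM normrM invfM mulrACA.
Qed.

Lemma normKX t n : K t -> normK e (t ^+ n) = normK e t ^+ n.
Proof.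
move=> Kt; elim: n => [|n IH].
  by rewrite !expr0 -(rmorph1 (ratr : rat -> R)) (normK_rat cf) expr1n.
have Ktn : K (t ^+ n).
  clear IH; elim: n => [|n IHn]; first by rewrite expr0; apply: (K1 cf).
  by rewrite exprS; apply: (KM cf).
by rewrite exprS (normKM cf Kt Ktn) IH exprS.
Qed.

Lemma FF_inj (p q : nat) x y : (0 < p)%N -> (0 < q)%N -> ~~ (3 %| p)%N ->
  r = p%:R / q%:R ->
  K x -> K y -> 0 < x -> 0 < y -> FF e r x = FF e r y -> x = y.
Proof.
move=> hp hq h3 hr Kx Ky x0 y0 Hxy.
have y0' : y != 0 by rewrite gt_eqF.
set t := x / y.
have Kt : K t by apply: (KM cf) => //; apply: (KV cf).
have t0 : 0 < t by rewrite divr_gt0.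
have xt : x = t * y by rewrite /t divfK.
have Ft : FF e r t = 1.
  move: Hxy; rewrite xt FFM // => H.
  have Fy := FF_gt0 Ky y0.
  by apply: (mulIf (x := FF e r y)); rewrite ?gt_eqF // mul1r.
have Nt : normK e t != 0 by apply: (normK_neq0 cf Kt); rewrite gt_eqF.
pose u : rat := `|normK e t|.
have u0 : 0 < u by rewrite normr_gt0.
have Pt : powR t r = ratr u.
  move: Ft; rewrite /FF -ratr_norm -/u => /(congr1 (fun z => z * ratr u)).
  by rewrite mul1r divfK // fmorph_eq0 gt_eqF.
have tp : t ^+ p = ratr (u ^+ q).
  rewrite rmorphXn; transitivity (powR t r ^+ q); last by congr (_ ^+ _); exact: Pt.
  rewrite -(powR_mulrn q (powR_ge0 t r)) -powRrM hr divfK; last first.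
    by rewrite pnatr_eq0 -lt0n.
  by rewrite powR_mulrn // ltW.
have Hu : u ^+ p = u ^+ (3 * q).
  have := congr1 (normK e) tp.
  rewrite (normKX _ Kt) (normK_rat cf) => /(congr1 (fun z => `|z|)) H.
  by rewrite /u -normrX H !normrX normr_id -exprM mulnC.
have [u1|u1] := eqVneq u 1.
  move: tp; rewrite u1 expr1n rmorph1 => /eqP; rewrite pexpr_eq1 // ?ltW //.
  by move/eqP => t1; rewrite xt t1 mul1r.
have := ieexprIn u0 u1 Hu => p3.
by move: h3; rewrite p3 dvdn_mulr.
Qed.

End FF.

Definition indep (R : realType) (a b : R) := forall x y z : rat,
  ratr x + ratr y * a + ratr z * b = 0 -> [/\ x = 0, y = 0 & z = 0].

Lemma indep_ne (R : realType) (a b : R) : indep a b ->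
  [/\ a - b != 0, 2 * a + b - 1 != 0 & a + 2 * b - 1 != 0].
Proof.
move=> H; split; apply/eqP => E.
- have H0 : ratr 0 + ratr 1 * a + ratr (-1) * b = 0 :> R.
    by rewrite rmorph0 rmorph1 rmorphN1 add0r mul1r mulN1r.
  have [_ H1 _] := H _ _ _ H0.
  by move: H1 => /eqP; rewrite oner_eq0.
- have H0 : ratr (-1) + ratr 2 * a + ratr 1 * b = 0 :> R.
    rewrite rmorphN1 rmorph1 (rmorph_nat _ 2) mul1r -E; lra.
  have [H1 _ _] := H _ _ _ H0.
  by move: H1 => /eqP; rewrite oppr_eq0 oner_eq0.
- have H0 : ratr (-1) + ratr 1 * a + ratr 2 * b = 0 :> R.
    rewrite rmorphN1 rmorph1 (rmorph_nat _ 2) mul1r -E; lra.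
  have [H1 _ _] := H _ _ _ H0.
  by move: H1 => /eqP; rewrite oppr_eq0 oner_eq0.
Qed.

Lemma indep_tr (R : realType) (a b a' b' d : R) (X Y Z : rat -> rat -> rat -> rat) :
  indep a b -> d != 0 ->
  (forall x y z, (ratr x + ratr y * a' + ratr z * b') * d =
     ratr (X x y z) + ratr (Y x y z) * a + ratr (Z x y z) * b) ->
  (forall x y z, X x y z = 0 -> Y x y z = 0 -> Z x y z = 0 -> [/\ x = 0, y = 0 & z = 0]) ->
  indep a' b'.
Proof.
move=> H d0 HE HS x y z H0; have := HE x y z; rewrite H0 mul0r => /esym /H [].
exact: HS.
Qed.

Lemma Delta_of (R : realType) (K : set R) e (cf : cubic_field K e) a' b' s y0 y1 y2 :
  K s -> K y1 -> K y2 -> 0 < s -> 0 < y0 -> 0 < y1 -> 0 < y2 ->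
  a' = s * y1 -> b' = s * y2 -> 1 - a' - b' = s * y0 -> indep a' b' ->
  DeltaK K a' b'.
Proof.
move=> Ks K1 K2 s0 y00 y10 y20 -> -> E Hi; split => //.
- by split; apply: (KM cf).
- exact: mulr_gt0.
- exact: mulr_gt0.
- by have := mulr_gt0 s0 y00; rewrite -E; lra.
Qed.

Lemma Tmap_Delta (R : realType) (K : set R) e (cf : cubic_field K e) r a b :
  DeltaK K a b -> DeltaK K (Tmap e r (a, b)).1 (Tmap e r (a, b)).2.
Proof.
move=> [[Ka Kb] Hind a0 b0 ab1].
have [n1 n2 n3] := indep_ne Hind.
have K1' := K1 cf.
rewrite /Tmap /eps.
case: ifP => _; [case: ifP => C | case: ifP => _; case: ifP => C] => /=.
- have d0 : 1 - b != 0 by apply/eqP; lra.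
  have y0 : 0 < a - b by rewrite lt_def n1 subr_ge0 C.
  apply: (Delta_of cf (s := (1 - b)^-1) (y0 := 1 - a - b) (y1 := a - b) (y2 := b)).
  + by apply: (KV cf) => //; apply: (KB cf).
  + exact: (KB cf).
  + done.
  + by rewrite invr_gt0; lra.
  + lra.
  + done.
  + done.
  + by rewrite mulrC.
  + by rewrite mulrC.
  + by field.
  apply: (indep_tr (d := 1 - b) (X := fun x y z => x) (Y := fun x y z => y)
             (Z := fun x y z => z - x - y) Hind d0).
    by move=> x y z; rewrite !rmorphB; field.
  by move=> x y z /= H1 H2 H3; split; lra.
- have d0 : 1 - a != 0 by apply/eqP; lra.
  have y0 : 0 < b - a by rewrite subr_gt0 ltNge C.
  apply: (Delta_of cf (s := (1 - a)^-1) (y0 := 1 - a - b) (y1 := a) (y2 := b - a)).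
  + by apply: (KV cf) => //; apply: (KB cf).
  + done.
  + exact: (KB cf).
  + by rewrite invr_gt0; lra.
  + lra.
  + done.
  + done.
  + by rewrite mulrC.
  + by rewrite mulrC.
  + by field.
  apply: (indep_tr (d := 1 - a) (X := fun x y z => x) (Y := fun x y z => y - x - z)
             (Z := fun x y z => z) Hind d0).
    by move=> x y z; rewrite !rmorphB; field.
  by move=> x y z /= H1 H2 H3; split; lra.
- have d0 : 1 - a != 0 by apply/eqP; lra.
  have y0 : 2 * a + b - 1 < 0 by rewrite lt_neqAle n2 C.
  apply: (Delta_of cf (s := (1 - a)^-1) (y0 := 1 - 2 * a - b) (y1 := a) (y2 := b)).
  + by apply: (KV cf) => //; apply: (KB cf).
  + done.
  + done.
  + by rewrite invr_gt0; lra.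
  + lra.
  + done.
  + done.
  + by rewrite mulrC.
  + by rewrite mulrC.
  + by field.
  apply: (indep_tr (d := 1 - a) (X := fun x y z => x) (Y := fun x y z => y - x)
             (Z := fun x y z => z) Hind d0).
    by move=> x y z; rewrite !rmorphB; field.
  by move=> x y z /= H1 H2 H3; split; lra.
- have d0 : a + b != 0 by apply/eqP; lra.
  have y0 : 0 < 2 * a + b - 1 by rewrite ltNge C.
  apply: (Delta_of cf (s := (a + b)^-1) (y0 := 1 - a - b) (y1 := 2 * a + b - 1) (y2 := b)).
  + by apply: (KV cf) => //; apply: (KD cf).
  + apply: (KB cf) => //; apply: (KD cf) => //.
    by apply: (KM cf) => //; have := Krat cf 2%:R; rewrite rmorph_nat.
  + done.
  + by rewrite invr_gt0; lra.
  + lra.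
  + done.
  + done.
  + by rewrite mulrC.
  + by rewrite mulrC.
  + by field.
  apply: (indep_tr (d := a + b) (X := fun x y z => - y) (Y := fun x y z => x + 2 * y)
             (Z := fun x y z => x + y + z) Hind d0).
    by move=> x y z; rewrite !rmorphD rmorphN rmorphM (rmorph_nat _ 2); field.
  by move=> x y z /= H1 H2 H3; split; lra.
- have d0 : 1 - b != 0 by apply/eqP; lra.
  have y0 : a + 2 * b - 1 < 0 by rewrite lt_neqAle n3 C.
  apply: (Delta_of cf (s := (1 - b)^-1) (y0 := 1 - a - 2 * b) (y1 := a) (y2 := b)).
  + by apply: (KV cf) => //; apply: (KB cf).
  + done.
  + done.
  + by rewrite invr_gt0; lra.
  + lra.
  + done.
  + done.
  + by rewrite mulrC.
  + by rewrite mulrC.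
  + by field.
  apply: (indep_tr (d := 1 - b) (X := fun x y z => x) (Y := fun x y z => y)
             (Z := fun x y z => z - x) Hind d0).
    by move=> x y z; rewrite !rmorphB; field.
  by move=> x y z /= H1 H2 H3; split; lra.
- have d0 : a + b != 0 by apply/eqP; lra.
  have y0 : 0 < a + 2 * b - 1 by rewrite ltNge C.
  apply: (Delta_of cf (s := (a + b)^-1) (y0 := 1 - a - b) (y1 := a) (y2 := a + 2 * b - 1)).
  + by apply: (KV cf) => //; apply: (KD cf).
  + done.
  + apply: (KB cf) => //; apply: (KD cf) => //.
    by apply: (KM cf) => //; have := Krat cf 2%:R; rewrite rmorph_nat.
  + by rewrite invr_gt0; lra.
  + lra.
  + done.
  + done.
  + by rewrite mulrC.
  + by rewrite mulrC.
  + by field.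
  apply: (indep_tr (d := a + b) (X := fun x y z => - z) (Y := fun x y z => x + y + z)
             (Z := fun x y z => x + 2 * z) Hind d0).
    by move=> x y z; rewrite !rmorphD rmorphN rmorphM (rmorph_nat _ 2); field.
  by move=> x y z /= H1 H2 H3; split; lra.
Qed.

Lemma eps_spec (R : realType) (e : 'I_3 -> R) r a b :
  let g := 1 - a - b in
  let v12 := vv e r a b in let v01 := vv e r a g in let v02 := vv e r b g in
  [/\ (eps e r (a, b) = (1, 2)%N -> [/\ v01 <= v12, v02 <= v12 & b <= a]),
      (eps e r (a, b) = (2, 1)%N -> [/\ v01 <= v12, v02 <= v12 & a < b]),
      (eps e r (a, b) = (0, 1)%N -> [/\ v12 <= v01, v02 <= v01 & 2 * a + b - 1 <= 0]),
      (eps e r (a, b) = (1, 0)%N -> [/\ v12 <= v01, v02 <= v01 & 0 < 2 * a + b - 1]) &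
  [/\ (eps e r (a, b) = (0, 2)%N -> [/\ v12 <= v02, v01 <= v02 & a + 2 * b - 1 <= 0]) &
      (eps e r (a, b) = (2, 0)%N -> [/\ v12 <= v02, v01 <= v02 & 0 < a + 2 * b - 1])]].
Proof.
move=> g v12 v01 v02; rewrite /eps -/g -/v12 -/v01 -/v02.
case: ifP => [/andP[h1 h2]|/negbT h].
  case: ifP => C; (split; [..|split]) => /eqP //= _; split => //.
  by rewrite ltNge C.
have h' : (v12 < v01) || (v12 < v02) by rewrite !ltNge -negb_and.
case: ifP => C1.
  case: ifP => C; (split; [..|split]) => /eqP //= _; split => //;
    try (by rewrite ltNge C); by case/orP: h'; lra.
move/negbT: C1; rewrite -ltNge => C1.
case: ifP => C; (split; [..|split]) => /eqP //= _; split => //;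
    try (by rewrite ltNge C); try (by case/orP: h'; lra); by apply: ltW.
Qed.

Lemma step (R : realType) (K : set R) e (cf : cubic_field K e) r (p q : nat) xi xj xk s :
  (0 < p)%N -> (0 < q)%N -> ~~ (3 %| p)%N -> r = p%:R / q%:R ->
  K xi -> K xj -> K xk -> K s -> 0 < xj -> 0 < xk -> xj < xi -> 0 < s -> xj != xk ->
  FF e r xi * FF e r xk <= FF e r xi * FF e r xj ->
  FF e r (s * (xi - xj)) * FF e r (s * xj) <= FF e r (s * (xi - xj)) * FF e r (s * xk) ->
  False.
Proof.
move=> hp hq h3 hr Ki Kj Kk Ks j0 k0 ji s0 njk H1 H2.
have i0 : 0 < xi by apply: lt_trans ji.
have Fi := FF_gt0 cf r Ki i0.
have h1 : FF e r xk <= FF e r xj by rewrite -(ler_pM2l Fi).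
have Kz : K (s * (xi - xj)) by apply: (KM cf) => //; apply: (KB cf).
have z0 : 0 < s * (xi - xj) by rewrite mulr_gt0 // subr_gt0.
have Fz := FF_gt0 cf r Kz z0.
have h2 : FF e r (s * xj) <= FF e r (s * xk) by rewrite -(ler_pM2l Fz).
rewrite !(FFM cf r) // in h2.
have Fs := FF_gt0 cf r Ks s0.
rewrite ler_pM2l // in h2.
have E : FF e r xj = FF e r xk by apply/le_anti; rewrite h1 h2.
by move: njk; rewrite (FF_inj cf hp hq h3 hr Kj Kk j0 k0 E) eqxx.
Qed.

Unset Implicit Arguments.

Theorem theorem2p6 (R : realType) (K : set R) (e : 'I_3 -> R)
  (p q : nat) (alpha beta : R) (n : nat) :
  cubic_field K e ->
  (0 < p)%N -> (0 < q)%N -> coprime p q -> ~~ (3 %| p)%N ->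
  DeltaK K alpha beta ->
  let r := (p%:R / q%:R : R) in
  let an := iter n (Tmap e r) (alpha, beta) in
  let i' := (eps e r an).1 in
  let j' := (eps e r an).2 in
  let k := (3 - i' - j')%N in
  eps e r (Tmap e r an) <> (i', k) /\ eps e r (Tmap e r an) <> (k, i').
Proof.
move=> cf hp hq _ h3 D r an i' j' k.
have Dan : forall m, DeltaK K (iter m (Tmap e r) (alpha, beta)).1
    (iter m (Tmap e r) (alpha, beta)).2.
  elim=> [|m IH] //=.
  by move: IH; case: (iter m _ _) => x y IH; apply: Tmap_Delta.
move: (Dan n); rewrite /k /i' /j' /an; clear k i' j' an Dan.
case: (iter n _ _) => a b Dab; rewrite /= in Dab.
have hr : r = p%:R / q%:R by [].
have [[Ka Kb] Hind a0 b0 ab1] := Dab.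
have [n1 n2 n3] := indep_ne Hind.
have K1' := K1 cf.
have Kg : K (1 - a - b) by apply: (KB cf) => //; apply: (KB cf).
have g0 : 0 < 1 - a - b by lra.
have nab : a != b by rewrite -subr_eq0.
have nag : a != 1 - a - b.
  apply/eqP => Eq; move: n2; rewrite (_ : 2 * a + b - 1 = 0) ?eqxx //; lra.
have nbg : b != 1 - a - b.
  apply/eqP => Eq; move: n3; rewrite (_ : a + 2 * b - 1 = 0) ?eqxx //; lra.
have nba : b != a by rewrite eq_sym.
have nga : 1 - a - b != a by rewrite eq_sym.
have ngb : 1 - a - b != b by rewrite eq_sym.
have [E12 E21 E01 E10 [E02 E20]] := eps_spec e r a b.
have : eps e r (a, b) \in [:: (1,2); (2,1); (0,1); (1,0); (0,2); (2,0)]%N.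
  by rewrite /eps; case: ifP => _; [case: ifP | case: ifP => _; case: ifP].
rewrite !inE => /orP[/eqP E|/orP[/eqP E|/orP[/eqP E|/orP[/eqP E|/orP[/eqP E|/eqP E]]]]];
  rewrite /Tmap E; cbn [Tij fst snd].
- have [h1 h2 h3'] := E12 E.
  have d0 : 1 - b != 0 by apply/eqP; lra.
  have ji : b < a by rewrite lt_def h3' andbT.
  set s := (1 - b)^-1.
  have Ks : K s by apply: (KV cf) => //; apply: (KB cf).
  have s0 : 0 < s by rewrite invr_gt0; lra.
  have Eg : 1 - (a - b) / (1 - b) - b / (1 - b) = s * ((1 - a - b)) by rewrite /s; field.
  have Ea : (a - b) / (1 - b) = s * (a - b) by rewrite /s; field.
  have Eb : b / (1 - b) = s * (b) by rewrite /s; field.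
  have [F12 F21 F01 F10 [F02 F20]] := eps_spec e r ((a - b) / (1 - b)) (b / (1 - b)).
  rewrite Eg Ea Eb in F12 F21 F01 F10 F02 F20 *.
  have H1 : FF e r (a) * FF e r ((1 - a - b)) <= FF e r (a) * FF e r (b).
    by move: h1; rewrite !vvF; lra.
  split => Hn.
  + have [k1 _ _] := F10 Hn; rewrite !vvF in k1.
    apply: (step cf hp hq h3 hr _ _ _ Ks _ _ ji s0 _ H1) => //; by move: k1; lra.
  + have [k1 _ _] := F01 Hn; rewrite !vvF in k1.
    apply: (step cf hp hq h3 hr _ _ _ Ks _ _ ji s0 _ H1) => //; by move: k1; lra.
- have [h1 h2 h3'] := E21 E.
  have d0 : 1 - a != 0 by apply/eqP; lra.
  have ji : a < b by exact: h3'.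
  set s := (1 - a)^-1.
  have Ks : K s by apply: (KV cf) => //; apply: (KB cf).
  have s0 : 0 < s by rewrite invr_gt0; lra.
  have Eg : 1 - a / (1 - a) - (b - a) / (1 - a) = s * ((1 - a - b)) by rewrite /s; field.
  have Ea : a / (1 - a) = s * (a) by rewrite /s; field.
  have Eb : (b - a) / (1 - a) = s * (b - a) by rewrite /s; field.
  have [F12 F21 F01 F10 [F02 F20]] := eps_spec e r (a / (1 - a)) ((b - a) / (1 - a)).
  rewrite Eg Ea Eb in F12 F21 F01 F10 F02 F20 *.
  have H1 : FF e r (b) * FF e r ((1 - a - b)) <= FF e r (b) * FF e r (a).
    by move: h2; rewrite !vvF; lra.
  split => Hn.
  + have [k1 _ _] := F20 Hn; rewrite !vvF in k1.
    apply: (step cf hp hq h3 hr _ _ _ Ks _ _ ji s0 _ H1) => //; by move: k1; lra.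
  + have [k1 _ _] := F02 Hn; rewrite !vvF in k1.
    apply: (step cf hp hq h3 hr _ _ _ Ks _ _ ji s0 _ H1) => //; by move: k1; lra.
- have [h1 h2 h3'] := E01 E.
  have d0 : 1 - a != 0 by apply/eqP; lra.
  have ji : a < (1 - a - b) by lra.
  set s := (1 - a)^-1.
  have Ks : K s by apply: (KV cf) => //; apply: (KB cf).
  have s0 : 0 < s by rewrite invr_gt0; lra.
  have Eg : 1 - a / (1 - a) - b / (1 - a) = s * ((1 - a - b) - a) by rewrite /s; field.
  have Ea : a / (1 - a) = s * (a) by rewrite /s; field.
  have Eb : b / (1 - a) = s * (b) by rewrite /s; field.
  have [F12 F21 F01 F10 [F02 F20]] := eps_spec e r (a / (1 - a)) (b / (1 - a)).
  rewrite Eg Ea Eb in F12 F21 F01 F10 F02 F20 *.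
  have H1 : FF e r ((1 - a - b)) * FF e r (b) <= FF e r ((1 - a - b)) * FF e r (a).
    by move: h2; rewrite !vvF; lra.
  split => Hn.
  + have [_ k1 _] := F02 Hn; rewrite !vvF in k1.
    apply: (step cf hp hq h3 hr _ _ _ Ks _ _ ji s0 _ H1) => //; by move: k1; lra.
  + have [_ k1 _] := F20 Hn; rewrite !vvF in k1.
    apply: (step cf hp hq h3 hr _ _ _ Ks _ _ ji s0 _ H1) => //; by move: k1; lra.
- have [h1 h2 h3'] := E10 E.
  have d0 : a + b != 0 by apply/eqP; lra.
  have ji : (1 - a - b) < a by lra.
  set s := (a + b)^-1.
  have Ks : K s by apply: (KV cf) => //; apply: (KD cf).
  have s0 : 0 < s by rewrite invr_gt0; lra.
  have Eg : 1 - (2 * a + b - 1) / (a + b) - b / (a + b) = s * ((1 - a - b)) by rewrite /s; field.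
  have Ea : (2 * a + b - 1) / (a + b) = s * (a - (1 - a - b)) by rewrite /s; field.
  have Eb : b / (a + b) = s * (b) by rewrite /s; field.
  have [F12 F21 F01 F10 [F02 F20]] := eps_spec e r ((2 * a + b - 1) / (a + b)) (b / (a + b)).
  rewrite Eg Ea Eb in F12 F21 F01 F10 F02 F20 *.
  have H1 : FF e r (a) * FF e r (b) <= FF e r (a) * FF e r ((1 - a - b)).
    by move: h1; rewrite !vvF; lra.
  split => Hn.
  + have [k1 _ _] := F12 Hn; rewrite !vvF in k1.
    apply: (step cf hp hq h3 hr _ _ _ Ks _ _ ji s0 _ H1) => //; by move: k1; lra.
  + have [k1 _ _] := F21 Hn; rewrite !vvF in k1.
    apply: (step cf hp hq h3 hr _ _ _ Ks _ _ ji s0 _ H1) => //; by move: k1; lra.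
- have [h1 h2 h3'] := E02 E.
  have d0 : 1 - b != 0 by apply/eqP; lra.
  have ji : b < (1 - a - b) by lra.
  set s := (1 - b)^-1.
  have Ks : K s by apply: (KV cf) => //; apply: (KB cf).
  have s0 : 0 < s by rewrite invr_gt0; lra.
  have Eg : 1 - a / (1 - b) - b / (1 - b) = s * ((1 - a - b) - b) by rewrite /s; field.
  have Ea : a / (1 - b) = s * (a) by rewrite /s; field.
  have Eb : b / (1 - b) = s * (b) by rewrite /s; field.
  have [F12 F21 F01 F10 [F02 F20]] := eps_spec e r (a / (1 - b)) (b / (1 - b)).
  rewrite Eg Ea Eb in F12 F21 F01 F10 F02 F20 *.
  have H1 : FF e r ((1 - a - b)) * FF e r (a) <= FF e r ((1 - a - b)) * FF e r (b).
    by move: h2; rewrite !vvF; lra.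
  split => Hn.
  + have [_ k1 _] := F01 Hn; rewrite !vvF in k1.
    apply: (step cf hp hq h3 hr _ _ _ Ks _ _ ji s0 _ H1) => //; by move: k1; lra.
  + have [_ k1 _] := F10 Hn; rewrite !vvF in k1.
    apply: (step cf hp hq h3 hr _ _ _ Ks _ _ ji s0 _ H1) => //; by move: k1; lra.
- have [h1 h2 h3'] := E20 E.
  have d0 : a + b != 0 by apply/eqP; lra.
  have ji : (1 - a - b) < b by lra.
  set s := (a + b)^-1.
  have Ks : K s by apply: (KV cf) => //; apply: (KD cf).
  have s0 : 0 < s by rewrite invr_gt0; lra.
  have Eg : 1 - a / (a + b) - (a + 2 * b - 1) / (a + b) = s * ((1 - a - b)) by rewrite /s; field.
  have Ea : a / (a + b) = s * (a) by rewrite /s; field.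
  have Eb : (a + 2 * b - 1) / (a + b) = s * (b - (1 - a - b)) by rewrite /s; field.
  have [F12 F21 F01 F10 [F02 F20]] := eps_spec e r (a / (a + b)) ((a + 2 * b - 1) / (a + b)).
  rewrite Eg Ea Eb in F12 F21 F01 F10 F02 F20 *.
  have H1 : FF e r (b) * FF e r (a) <= FF e r (b) * FF e r ((1 - a - b)).
    by move: h1; rewrite !vvF; lra.
  split => Hn.
  + have [_ k1 _] := F21 Hn; rewrite !vvF in k1.
    apply: (step cf hp hq h3 hr _ _ _ Ks _ _ ji s0 _ H1) => //; by move: k1; lra.
  + have [_ k1 _] := F12 Hn; rewrite !vvF in k1.
    apply: (step cf hp hq h3 hr _ _ _ Ks _ _ ji s0 _ H1) => //; by move: k1; lra.
Qed.
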